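(* Let $S$ be an abundant semigroup with an adequate transversal $S^0$. Then for all $x\in S^0$, $a\in\Lambda$ and $b\in I$: $a\,\mathcal{R}\,x^\ast$ if and only if $\overline{a}=x^\ast$, and $b\,\mathcal{L}\,x^+$ if and only if $\overline{b}=x^+$.
   Context: For a semigroup $S$, $S^1$ is $S$ with an identity adjoined, $\mathcal{L},\mathcal{R}$ Green's relations of $S$. $\mathcal{R}^\ast=\{(a,b):\forall x,y\in S^1,\ xa=ya\iff xb=yb\}$, $\mathcal{L}^\ast=\{(a,b):\forall x,y\in S^1,\ ax=ay\iff bx=by\}$. $S$ is abundant if each $\mathcal{R}^\ast$- and $\mathcal{L}^\ast$-class contains an idempotent; adequate if also idempotents commute (then $a^+$, $a^\ast$ are the unique idempotents $\mathcal{R}^\ast$-, resp. $\mathcal{L}^\ast$-related to $a$). An abundant subsemigroup $U$ of abundant $S$ is a $\ast$-subsemigroup if $\mathcal{L}^\ast(U)=\mathcal{L}^\ast(S)\cap(U\times U)$, $\mathcal{R}^\ast(U)=\mathcal{R}^\ast(S)\cap(U\times U)$. An adequate $\ast$-subsemigroup $S^0$ of abundant $S$ is an adequate transversal if each $x\in S$ has a unique $\overline{x}\in S^0$ and idempotents $e,f$ of $S$ (then unique, written $e_x,f_x$) with $x=e\overline{x}f$, $e\,\mathcal{L}\,\overline{x}^+$, $f\,\mathcal{R}\,\overline{x}^\ast$. $I=\{e_x:x\in S\}$, $\Lambda=\{f_x:x\in S\}$. *)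

(* Defs.v *)
From Stdlib Require Import ClassicalEpsilon.

Set Implicit Arguments.

Record semigroup := Semigroup {
  carrier :> Type;
  mul : carrier -> carrier -> carrier;
  mulA : forall a b c, mul a (mul b c) = mul (mul a b) c }.

Section Defs.
Variable S : semigroup.
Local Notation "x * y" := (mul S x y).

(* S^1 = option S, with None the adjoined identity. *)
Definition lmul1 (u : option S) (a : S) : S :=
  match u with None => a | Some x => x * a end.
Definition rmul1 (a : S) (u : option S) : S :=
  match u with None => a | Some x => a * x end.

Definition idem (e : S) : Prop := e * e = e.

Definition GreenL (a b : S) : Prop :=
  (exists u, a = lmul1 u b) /\ (exists v, b = lmul1 v a).
Definition GreenR (a b : S) : Prop :=
  (exists u, a = rmul1 b u) /\ (exists v, b = rmul1 a v).

Definition in1 (U : S -> Prop) (u : option S) : Prop :=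
  match u with None => True | Some x => U x end.

Definition Rstar_in (U : S -> Prop) (a b : S) : Prop :=
  forall x y, in1 U x -> in1 U y ->
    (lmul1 x a = lmul1 y a <-> lmul1 x b = lmul1 y b).
Definition Lstar_in (U : S -> Prop) (a b : S) : Prop :=
  forall x y, in1 U x -> in1 U y ->
    (rmul1 a x = rmul1 a y <-> rmul1 b x = rmul1 b y).

Definition allS : S -> Prop := fun _ => True.
Definition Rstar := Rstar_in allS.
Definition Lstar := Lstar_in allS.

Definition subsemigroup (U : S -> Prop) : Prop :=
  forall a b, U a -> U b -> U (a * b).

Definition abundant_in (U : S -> Prop) : Prop :=
  subsemigroup U /\
  forall a, U a ->
    (exists e, U e /\ idem e /\ Rstar_in U a e) /\
    (exists f, U f /\ idem f /\ Lstar_in U a f).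

Definition abundant : Prop := abundant_in allS.

Definition adequate_in (U : S -> Prop) : Prop :=
  abundant_in U /\
  forall e f, U e -> U f -> idem e -> idem f -> e * f = f * e.

Definition star_subsemigroup (U : S -> Prop) : Prop :=
  abundant_in U /\
  (forall a b, U a -> U b -> (Lstar_in U a b <-> Lstar a b)) /\
  (forall a b, U a -> U b -> (Rstar_in U a b <-> Rstar a b)).

(* a^+ and a^* in an adequate subsemigroup U (unique idempotents of U) *)
Definition plus_in (U : S -> Prop) (a : S) : S :=
  epsilon (inhabits a) (fun e => U e /\ idem e /\ Rstar_in U a e).
Definition star_in (U : S -> Prop) (a : S) : S :=
  epsilon (inhabits a) (fun f => U f /\ idem f /\ Lstar_in U a f).

Definition decomp (S0 : S -> Prop) (x e y f : S) : Prop :=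
  S0 y /\ idem e /\ idem f /\ x = e * y * f /\
  GreenL e (plus_in S0 y) /\ GreenR f (star_in S0 y).

Definition adequate_transversal (S0 : S -> Prop) : Prop :=
  adequate_in S0 /\ star_subsemigroup S0 /\
  forall x, (exists e y f, decomp S0 x e y f) /\
    (forall e y f e' y' f', decomp S0 x e y f -> decomp S0 x e' y' f' -> y = y').

Definition bar (S0 : S -> Prop) (x : S) : S :=
  epsilon (inhabits x) (fun y => exists e f, decomp S0 x e y f).
Definition e_of (S0 : S -> Prop) (x : S) : S :=
  epsilon (inhabits x) (fun e => exists f, decomp S0 x e (bar S0 x) f).
Definition f_of (S0 : S -> Prop) (x : S) : S :=
  epsilon (inhabits x) (fun f => exists e, decomp S0 x e (bar S0 x) f).

Definition Iset (S0 : S -> Prop) (b : S) : Prop := exists x, b = e_of S0 x.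
Definition Lambdaset (S0 : S -> Prop) (a : S) : Prop := exists x, a = f_of S0 x.

End Defs.

(* Main.v *)
Require Import Defs.
From Stdlib Require Import ClassicalEpsilon.

Lemma plus_idem (S : semigroup) (S0 : S -> Prop) g :
  adequate_in S S0 -> S0 g -> idem S g -> plus_in S S0 g = g.
Proof.
  intros [[Hsub Hab] Hc] Hg Hig.
  destruct (Hab g Hg) as [[e [He [Hie HR]]] _].
  unfold plus_in.
  destruct (epsilon_spec (inhabits g) (fun e => S0 e /\ idem S e /\ Rstar_in S S0 g e)
    (ex_intro _ e (conj He (conj Hie HR)))) as [He' [Hie' HR']].
  set (e' := epsilon _ _) in *.
  assert (H1 : mul S g e' = e') by (apply (proj1 (HR' (Some g) None Hg I)); exact Hig).
  assert (H2 : mul S e' g = g) by (apply (proj2 (HR' (Some e') None He' I)); exact Hie').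
  rewrite <- H2, Hc; auto.
Qed.

Lemma star_idem (S : semigroup) (S0 : S -> Prop) g :
  adequate_in S S0 -> S0 g -> idem S g -> star_in S S0 g = g.
Proof.
  intros [[Hsub Hab] Hc] Hg Hig.
  destruct (Hab g Hg) as [_ [e [He [Hie HR]]]].
  unfold star_in.
  destruct (epsilon_spec (inhabits g) (fun e => S0 e /\ idem S e /\ Lstar_in S S0 g e)
    (ex_intro _ e (conj He (conj Hie HR)))) as [He' [Hie' HR']].
  set (e' := epsilon _ _) in *.
  assert (H1 : mul S e' g = e') by (apply (proj1 (HR' (Some g) None Hg I)); exact Hig).
  assert (H2 : mul S g e' = g) by (apply (proj2 (HR' (Some e') None He' I)); exact Hie').
  rewrite <- H2, Hc; auto.
Qed.

Lemma star_spec (S : semigroup) (S0 : S -> Prop) y :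
  adequate_in S S0 -> S0 y -> S0 (star_in S S0 y) /\ idem S (star_in S S0 y).
Proof.
  intros [[Hsub Hab] Hc] Hy.
  destruct (Hab y Hy) as [_ [e [He [Hie HR]]]].
  unfold star_in.
  destruct (epsilon_spec (inhabits y) (fun e => S0 e /\ idem S e /\ Lstar_in S S0 y e)
    (ex_intro _ e (conj He (conj Hie HR)))) as [He' [Hie' HR']]; auto.
Qed.

Lemma plus_spec (S : semigroup) (S0 : S -> Prop) y :
  adequate_in S S0 -> S0 y -> S0 (plus_in S S0 y) /\ idem S (plus_in S S0 y).
Proof.
  intros [[Hsub Hab] Hc] Hy.
  destruct (Hab y Hy) as [[e [He [Hie HR]]] _].
  unfold plus_in.
  destruct (epsilon_spec (inhabits y) (fun e => S0 e /\ idem S e /\ Rstar_in S S0 y e)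
    (ex_intro _ e (conj He (conj Hie HR)))) as [He' [Hie' HR']]; auto.
Qed.

Lemma R_idem (S : semigroup) (a e : S) :
  idem S a -> idem S e -> GreenR S a e -> mul S e a = a /\ mul S a e = e.
Proof.
  intros Ha He [[u Hu] [v Hv]]; split.
  - destruct u as [u|]; simpl in Hu; subst a; [rewrite mulA, He|]; auto.
  - destruct v as [v|]; simpl in Hv; rewrite Hv; [rewrite mulA, Ha|]; auto.
Qed.

Lemma L_idem (S : semigroup) (a e : S) :
  idem S a -> idem S e -> GreenL S a e -> mul S a e = a /\ mul S e a = e.
Proof.
  intros Ha He [[u Hu] [v Hv]]; split.
  - destruct u as [u|]; simpl in Hu; subst a; [rewrite <- mulA, He|]; auto.
  - destruct v as [v|]; simpl in Hv; rewrite Hv; [rewrite <- mulA, Ha|]; auto.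
Qed.

Lemma bar_unique (S : semigroup) (S0 : S -> Prop) a e w f :
  adequate_transversal S S0 -> decomp S S0 a e w f -> bar S S0 a = w.
Proof.
  intros [_ [_ Ht]] Hd.
  destruct (Ht a) as [Hex Hun].
  unfold bar.
  destruct (epsilon_spec (inhabits a) (fun y => exists e f, decomp S S0 a e y f)
     (ex_intro _ w (ex_intro _ e (ex_intro _ f Hd)))) as [e' [f' Hd']].
  exact (Hun _ _ _ _ _ _ Hd' Hd).
Qed.

Theorem lemma2p15 (S : semigroup) (S0 : S -> Prop) :
  abundant S -> adequate_transversal S S0 ->
  forall x a b : S, S0 x -> Lambdaset S S0 a -> Iset S S0 b ->
    (GreenR S a (star_in S S0 x) <-> bar S S0 a = star_in S S0 x) /\
    (GreenL S b (plus_in S S0 x) <-> bar S S0 b = plus_in S S0 x).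
Proof.
  intros Hab Ht x a b Hx [z Ha] [z' Hb].
  pose proof Ht as [Had [Hst Htr]].
  split.
  -
    destruct (Htr z) as [[e0 [y0 [f0 Hd0]]] _].
    assert (Hd : exists e, decomp S S0 z e (bar S S0 z) a).
    { subst a. unfold f_of.
      apply (epsilon_spec (inhabits z) (fun f => exists e, decomp S S0 z e (bar S S0 z) f)).
      unfold bar.
      destruct (epsilon_spec (inhabits z) (fun y => exists e f, decomp S S0 z e y f)
        (ex_intro _ y0 (ex_intro _ e0 (ex_intro _ f0 Hd0)))) as [e1 [f1 Hd1]].
      exists f1, e1; exact Hd1. }
    destruct Hd as [e [Hy [_ [Hia [_ [_ HR]]]]]].
    set (y := bar S S0 z) in *.
    destruct (star_spec S S0 y Had Hy) as [Hys Hyi].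
    destruct (star_spec S S0 x Had Hx) as [Hxs Hxi].
    destruct (R_idem S a _ Hia Hyi HR) as [H1 H2].
    assert (Hbar : bar S S0 a = star_in S S0 y).
    { apply (bar_unique S S0 a (star_in S S0 y) (star_in S S0 y) a Ht).
      repeat split; auto.
      - rewrite Hyi, H1; reflexivity.
      - rewrite (plus_idem S S0 _ Had Hys Hyi). exists None; reflexivity.
      - rewrite (plus_idem S S0 _ Had Hys Hyi). exists None; reflexivity.
      - rewrite (star_idem S S0 _ Had Hys Hyi). destruct HR as [[u Hu] _]; exists u; exact Hu.
      - rewrite (star_idem S S0 _ Had Hys Hyi). destruct HR as [_ [v Hv]]; exists v; exact Hv. }
    rewrite Hbar. split.
    + intro HRx. destruct (R_idem S a _ Hia Hxi HRx) as [K1 K2].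
      assert (E1 : mul S (star_in S S0 x) (star_in S S0 y) = star_in S S0 y).
      { rewrite <- H2 at 1. rewrite mulA, K1. exact H2. }
      assert (E2 : mul S (star_in S S0 y) (star_in S S0 x) = star_in S S0 x).
      { rewrite <- K2 at 1. rewrite mulA, H1. exact K2. }
      rewrite <- E1 at 1. rewrite (proj2 Had) by auto. exact E2.
    + intro E. rewrite <- E. exact HR.
  - destruct (Htr z') as [[e0 [y0 [f0 Hd0]]] _].
    assert (Hd : exists f, decomp S S0 z' b (bar S S0 z') f).
    { subst b. unfold e_of.
      apply (epsilon_spec (inhabits z') (fun e => exists f, decomp S S0 z' e (bar S S0 z') f)).
      unfold bar.
      destruct (epsilon_spec (inhabits z') (fun y => exists e f, decomp S S0 z' e y f)
        (ex_intro _ y0 (ex_intro _ e0 (ex_intro _ f0 Hd0)))) as [e1 [f1 Hd1]].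
      exists e1, f1; exact Hd1. }
    destruct Hd as [f [Hy [Hib [_ [_ [HL _]]]]]].
    set (y := bar S S0 z') in *.
    destruct (plus_spec S S0 y Had Hy) as [Hys Hyi].
    destruct (plus_spec S S0 x Had Hx) as [Hxs Hxi].
    destruct (L_idem S b _ Hib Hyi HL) as [H1 H2].
    assert (Hbar : bar S S0 b = plus_in S S0 y).
    { apply (bar_unique S S0 b b (plus_in S S0 y) (plus_in S S0 y) Ht).
      repeat split; auto.
      - rewrite H1, H1; reflexivity.
      - rewrite (plus_idem S S0 _ Had Hys Hyi). destruct HL as [[u Hu] _]; exists u; exact Hu.
      - rewrite (plus_idem S S0 _ Had Hys Hyi). destruct HL as [_ [v Hv]]; exists v; exact Hv.
      - rewrite (star_idem S S0 _ Had Hys Hyi). exists None; reflexivity.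
      - rewrite (star_idem S S0 _ Had Hys Hyi). exists None; reflexivity. }
    rewrite Hbar. split.
    + intro HLx. destruct (L_idem S b _ Hib Hxi HLx) as [K1 K2].
      assert (E1 : mul S (plus_in S S0 y) (plus_in S S0 x) = plus_in S S0 y).
      { rewrite <- H2 at 1. rewrite <- mulA, K1. exact H2. }
      assert (E2 : mul S (plus_in S S0 x) (plus_in S S0 y) = plus_in S S0 x).
      { rewrite <- K2 at 1. rewrite <- mulA, H1. exact K2. }
      rewrite <- E1 at 1. rewrite (proj2 Had) by auto. exact E2.
    + intro E. rewrite <- E. exact HL.
Qed.
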